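(* Consider the discrete-time system $x_{k+1}=(I-\varepsilon\Delta)x_k+\varepsilon\pi A\psi(x_k)$, with $\pi>0$, each $\psi_i$ satisfying (A1)–(A4), and step size $0<\varepsilon<\frac{2}{\max_i\delta_i}$. Suppose the system admits a period-2 orbit: there is $K\ge0$ such that $x_{K+1}\neq x_K$ and $x_{k+2}=x_k$ for all $k\ge K$. Then $\pi>\pi_{1,d}$.
   Context: Let $\mathcal G$ be an undirected, connected signed graph on $n$ nodes without self-loops, with symmetric adjacency matrix $A=[a_{ij}]$ having zero diagonal and entries of either sign. Let $\delta_i=\sum_j|a_{ij}|>0$ and $\Delta=\mathrm{diag}(\delta_i)$. For $\pi>0$ let $L_\pi=\Delta-\pi A$. Define $\pi_{1,d}$ as the smallest $\pi>0$ at which the largest eigenvalue satisfies $\lambda_n(L_\pi)=2/\varepsilon$, equivalently the smallest eigenvalue of $J_\pi=I-\varepsilon L_\pi$ equals $-1$. Each $\psi_i:\mathbb R\to\mathbb R$ is smooth and satisfies: (A1) $\psi_i$ is odd; (A2) $\psi_i'>0$ everywhere and $\psi_i'(0)=1$; (A3) $\lim_{s\to\pm\infty}\psi_i(s)=\pm1$; (A4) $\psi_i$ is strictly convex for $s<0$ and strictly concave for $s>0$. Here $\psi(x)=(\psi_i(x_i))_i$. *)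

(* Defs.v *)
From HB Require Import structures.
From mathcomp Require Import all_boot all_order all_algebra.
From mathcomp Require Import all_classical all_reals all_analysis.
Set Implicit Arguments. Unset Strict Implicit. Unset Printing Implicit Defensive.
Import Order.TTheory GRing.Theory Num.Theory.
Import numFieldNormedType.Exports.
Local Open Scope classical_set_scope.
Local Open Scope ring_scope.

Section Defs.
Variable R : realType.

Definition delta (n : nat) (A : 'M[R]_n) (i : 'I_n) : R := \sum_(j < n) `|A i j|.

Definition Delta (n : nat) (A : 'M[R]_n) : 'M[R]_n := diag_mx (\row_i delta A i).

Definition Lpi (n : nat) (A : 'M[R]_n) (p : R) : 'M[R]_n := Delta A - p *: A.

Definition is_largest_eigenvalue (n : nat) (M : 'M[R]_n) (lam : R) : Prop :=
  eigenvalue M lam /\ forall mu, eigenvalue M mu -> mu <= lam.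

Definition is_pi1d (n : nat) (A : 'M[R]_n) (eps p : R) : Prop :=
  0 < p /\ is_largest_eigenvalue (Lpi A p) (2 / eps) /\
  forall q, 0 < q -> is_largest_eigenvalue (Lpi A q) (2 / eps) -> p <= q.

Definition signed_graph_ok (n : nat) (A : 'M[R]_n) : Prop :=
  A^T = A /\ (forall i, A i i = 0) /\
  (forall i j : 'I_n, connect (fun k l => A k l != 0) i j) /\
  (forall i, 0 < delta A i).

Definition smooth (f : R -> R) : Prop :=
  forall (k : nat) (x : R), derivable (iter k (fun g : R -> R => derive1 g) f) x 1.

(* assumptions (A1)-(A4) on psi_i *)
Definition admissible (f : R -> R) : Prop :=
  smooth f /\
  (forall s, f (- s) = - f s) /\
  (forall s, 0 < derive1 f s) /\ derive1 f 0 = 1 /\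
  (f x @[x --> +oo] --> (1 : R)) /\ (f x @[x --> -oo] --> (-1 : R)) /\
  (forall x y t, x < 0 -> y < 0 -> x != y -> 0 < t < 1 ->
      f (t * x + (1 - t) * y) < t * f x + (1 - t) * f y) /\
  (forall x y t, 0 < x -> 0 < y -> x != y -> 0 < t < 1 ->
      t * f x + (1 - t) * f y < f (t * x + (1 - t) * y)).

Definition psiv (n : nat) (psi : 'I_n -> R -> R) (v : 'cV[R]_n) : 'cV[R]_n :=
  \col_i psi i (v i 0).

Definition is_trajectory (n : nat) (A : 'M[R]_n) (psi : 'I_n -> R -> R)
  (eps p : R) (x : nat -> 'cV[R]_n) : Prop :=
  forall k, x k.+1 = (1%:M - eps *: Delta A) *m x k + (eps * p) *: (A *m psiv psi (x k)).

End Defs.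

(* Main.v *)
Require Import Defs.
From HB Require Import structures.
From mathcomp Require Import all_boot all_order all_algebra.
From mathcomp Require Import all_classical all_reals all_analysis.
From mathcomp Require Import ring lra.
Import Order.TTheory GRing.Theory Num.Theory.
Import numFieldNormedType.Exports.
Local Open Scope classical_set_scope.
Local Open Scope ring_scope.


Definition qf {R : realType} {n : nat} (M : 'M[R]_n) (u : 'cV[R]_n) : R :=
  (u^T *m M *m u) 0 0.
Definition nrm {R : realType} {n : nat} (u : 'cV[R]_n) : R := (u^T *m u) 0 0.
Definition cB {R : realType} {n : nat} (M : 'M[R]_n) : R :=
  \sum_i \sum_j `|M i j|.

Lemma bil_sum {R : realType} {n : nat} (M : 'M[R]_n) (u v : 'cV[R]_n) :
  (u^T *m M *m v) 0 0 = \sum_i \sum_j u i 0 * M i j * v j 0.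
Proof.
rewrite mxE (exchange_big) /=.
apply: eq_bigr => i _; rewrite mxE big_distrl /=.
by apply: eq_bigr => j _; rewrite !mxE.
Qed.

Lemma nrm_sum {R : realType} {n : nat} (u : 'cV[R]_n) :
  nrm u = \sum_i u i 0 ^+ 2.
Proof. by rewrite /nrm mxE; apply: eq_bigr => i _; rewrite !mxE expr2. Qed.

Lemma nrm_ge0 {R : realType} {n : nat} (u : 'cV[R]_n) : 0 <= nrm u.
Proof. by rewrite nrm_sum; apply: sumr_ge0 => i _; rewrite sqr_ge0. Qed.

Lemma sq_le_nrm {R : realType} {n : nat} (u : 'cV[R]_n) i : u i 0 ^+ 2 <= nrm u.
Proof.
rewrite nrm_sum (bigD1 i) //= lerDl; apply: sumr_ge0 => j _; exact: sqr_ge0.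
Qed.

Lemma nrm_gt0 {R : realType} {n : nat} (u : 'cV[R]_n) : u != 0 -> 0 < nrm u.
Proof.
move=> u0; have [i ui] : exists i, u i 0 != 0.
  apply/existsP; apply: contraR u0 => /existsPn H; apply/eqP/matrixP => i j.
  by rewrite (ord1 j) mxE; move: (H i); rewrite negbK => /eqP.
rewrite nrm_sum (bigD1 i) //=; apply: ltr_wpDr.
  by apply: sumr_ge0 => j _; exact: sqr_ge0.
by rewrite lt0r sqr_ge0 andbT sqrf_eq0.
Qed.

Lemma qf_bound {R : realType} {n : nat} (M : 'M[R]_n) (u : 'cV[R]_n) :
  `|qf M u| <= cB M * nrm u.
Proof.
rewrite /qf bil_sum /cB big_distrl /=.
apply: (le_trans (ler_norm_sum _ _ _)); apply: ler_sum => i _.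
rewrite big_distrl /=.
apply: (le_trans (ler_norm_sum _ _ _)); apply: ler_sum => j _.
have h1 := sq_le_nrm u i; have h2 := sq_le_nrm u j.
rewrite !normrM.
have a0 := normr_ge0 (u i 0); have b0 := normr_ge0 (u j 0); have m0 := normr_ge0 (M i j).
have e1 : `|u i 0| ^+ 2 = u i 0 ^+ 2 by rewrite real_normK ?num_real.
have e2 : `|u j 0| ^+ 2 = u j 0 ^+ 2 by rewrite real_normK ?num_real.
have : `|u i 0| * `|u j 0| <= nrm u by nra.
move=> h; nra.
Qed.


Definition bil {R : realType} {n : nat} (M : 'M[R]_n) (a b : 'cV[R]_n) : R :=
  (a^T *m M *m b) 0 0.

Lemma bil_expand {R : realType} {n : nat} (M : 'M[R]_n) (u y : 'cV[R]_n) t :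
  bil M (u - t *: y) (u - t *: y) =
  bil M u u - t * bil M y u - t * bil M u y + t ^+ 2 * bil M y y.
Proof.
rewrite /bil.
have -> : (u - t *: y)^T = u^T - t *: y^T by rewrite linearB linearZ.
rewrite !(mulmxBl, mulmxBr) -!(scalemxAl, scalemxAr) !mxE.
lra.
Qed.


Definition rq_set {R : realType} {n : nat} (M : 'M[R]_n) : set R :=
  [set r | exists2 u : 'cV[R]_n, u != 0 & r = qf M u / nrm u].
Definition gmax {R : realType} {n : nat} (M : 'M[R]_n) : R := sup (rq_set M).

Lemma const1_neq0 {R : realType} {n : nat} : (0 < n)%N -> (const_mx 1 : 'cV[R]_n) != 0.
Proof.
move=> n0; apply/eqP => /matrixP/(_ (Ordinal n0) 0); rewrite !mxE => /eqP.
by rewrite oner_eq0.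
Qed.

Lemma rq_has_sup {R : realType} {n : nat} (M : 'M[R]_n) : (0 < n)%N -> has_sup (rq_set M).
Proof.
move=> n0; split; first by exists (qf M (const_mx 1 : 'cV[R]_n) / nrm (const_mx 1 : 'cV[R]_n)); exists (const_mx 1) => //; exact: const1_neq0.
exists (cB M) => r [u u0 ->].
have N0 := nrm_gt0 _ u0.
rewrite ler_pdivrMr //.
exact: le_trans (ler_norm _) (qf_bound M u).
Qed.

Lemma gmax_ub {R : realType} {n : nat} (M : 'M[R]_n) (u : 'cV[R]_n) : (0 < n)%N ->
  qf M u <= gmax M * nrm u.
Proof.
move=> n0; have [->|u0] := eqVneq u 0.
  by rewrite /qf /nrm !mulmx0 mxE mulr0.
have N0 := nrm_gt0 _ u0.
rewrite -ler_pdivrMr //; apply: sup_upper_bound; first exact: rq_has_sup.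
by exists u.
Qed.

Lemma gmax_le {R : realType} {n : nat} (M : 'M[R]_n) c : (0 < n)%N ->
  (forall u, qf M u <= c * nrm u) -> gmax M <= c.
Proof.
move=> n0 H; apply: ge_sup; first by exists (qf M (const_mx 1 : 'cV[R]_n) / nrm (const_mx 1 : 'cV[R]_n)); exists (const_mx 1) => //; exact: const1_neq0.
move=> r [u u0 ->]; have N0 := nrm_gt0 _ u0.
by rewrite ler_pdivrMr.
Qed.

Lemma eig_le {R : realType} {n : nat} (M : 'M[R]_n) mu : (0 < n)%N ->
  eigenvalue M mu -> mu <= gmax M.
Proof.
move=> n0 /eigenvalueP [v vM v0].
have u0 : v^T != 0 by rewrite trmx_eq0.
have N0 := nrm_gt0 _ u0.
have := gmax_ub M (v^T) n0.
rewrite /qf /nrm trmxK vM -scalemxAl mxE => h.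
move: N0; rewrite /nrm trmxK => N0. by rewrite -(ler_pM2r N0).
Qed.


Lemma qf_shift {R : realType} {n : nat} (M : 'M[R]_n) c u :
  qf (c%:M - M) u = c * nrm u - qf M u.
Proof.
by rewrite /qf /nrm mulmxBr mulmxBl mul_mx_scalar -scalemxAl !mxE.
Qed.

Lemma nrm_mul {R : realType} {n : nat} (B : 'M[R]_n) y :
  nrm (B *m y) = qf (B^T *m B) y.
Proof. by rewrite /nrm /qf trmx_mul !mulmxA. Qed.

Lemma eig_attain {R : realType} {n : nat} (M : 'M[R]_n) : (0 < n)%N ->
  M^T = M -> eigenvalue M (gmax M).
Proof.
move=> n0 MT; set g := gmax M; set S := g%:M - M.
have ST : S^T = S by rewrite /S linearB /= tr_scalar_mx MT.
have [Su|Snu] := boolP (S \in unitmx); last first.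
  have : \det S == 0 by rewrite unitmxE unitfE negbK in Snu.
  move=> /det0P [v v0 vS]; apply/eigenvalueP; exists v => //.
  by move: vS; rewrite /S mulmxBr mul_mx_scalar => /eqP; rewrite subr_eq0 => /eqP <-.
exfalso.
set T := invmx S.
have qS0 : forall u, 0 <= qf S u.
  by move=> u; rewrite /S qf_shift subr_ge0; exact: gmax_ub.
set c1 := cB S + 1; set c2 := cB (T^T *m T) + 1.
have c1p : 0 < c1 by rewrite /c1 ltr_wpDl // sumr_ge0 // => i _; rewrite sumr_ge0.
have c2p : 0 < c2 by rewrite /c2 ltr_wpDl // sumr_ge0 // => i _; rewrite sumr_ge0.
have H2 : forall u, nrm (S *m u) <= c1 * qf S u.
  move=> u; set y := S *m u.
  have := qS0 (u - c1^-1 *: y); rewrite /qf -/(bil S _ _) bil_expand.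
  have e1 : bil S u y = nrm y by rewrite /bil /nrm /y trmx_mul ST !mulmxA.
  have e2 : bil S y u = nrm y by rewrite /bil /nrm /y trmx_mul ST !mulmxA.
  rewrite e1 e2.
  have b : bil S y y <= c1 * nrm y.
    apply: le_trans (ler_norm _) _; apply: le_trans (qf_bound S y) _.
    by apply: ler_wpM2r; [exact: nrm_ge0 | rewrite /c1 lerDl].
  move=> h; change (nrm y <= c1 * bil S u u) .
  have kp : 0 < c1^-1 by rewrite invr_gt0.
  have kc : c1^-1 * c1 = 1 by rewrite mulVf // gt_eqF.
  have hb : c1^-1 ^+ 2 * bil S y y <= c1^-1 * nrm y.
    rewrite expr2 -mulrA ler_pM2l //.
    apply: le_trans (_ : c1^-1 * (c1 * nrm y) <= _); first by rewrite ler_pM2l.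
    by rewrite mulrA kc mul1r.
  have hq : c1^-1 * nrm y <= bil S u u by lra.
  by rewrite -(ler_pM2l kp) mulrA kc mul1r.
have H3 : forall u, nrm u <= c2 * nrm (S *m u).
  move=> u; rewrite -{1}(mulKmx Su u) -/T [nrm (T *m _)]nrm_mul.
  apply: le_trans (ler_norm _) _; apply: le_trans (qf_bound _ _) _.
  by apply: ler_wpM2r; [exact: nrm_ge0 | rewrite /c2 lerDl].
set k := (c1 * c2)^-1.
have kp : 0 < k by rewrite invr_gt0 mulr_gt0.
have kc : k * (c1 * c2) = 1 by rewrite mulVf // gt_eqF // mulr_gt0.
have H4 : forall u, qf M u <= (g - k) * nrm u.
  move=> u; have h1 := H3 u; have h2 := H2 u.
  have := qf_shift M g u; rewrite -/S => e.
  have h3 : nrm u <= c1 * c2 * qf S u.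
    have h5 := ler_wpM2l (ltW c2p) h2.
    apply: le_trans h1 _; apply: le_trans h5 _; rewrite mulrA (mulrC c2); lra.
  have h4 : k * nrm u <= qf S u.
    by rewrite -(ler_pM2l (mulr_gt0 c1p c2p)) mulrA (mulrC _ k) kc mul1r.
  lra.
have := gmax_le _ _ n0 H4; rewrite -/g; lra.
Qed.


Lemma ivt_first {R : realType} (g : R -> R) C th p : 0 <= C ->
  (forall a b, g a <= g b + C * `|a - b|) -> g 0 < th -> th < g p -> 0 < p ->
  exists p1, [/\ 0 < p1, p1 < p, g p1 = th & forall q, 0 < q -> th <= g q -> p1 <= q].
Proof.
move=> C0 Lip g0 gp p0.
set U := [set q : R | 0 <= q /\ forall r, 0 <= r <= q -> g r < th].
have U0 : U 0 by split => // r /andP [a b]; have -> : r = 0 by apply/eqP; rewrite eq_le a b.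
have Up : ubound U p.
  move=> q [q0 Hq]; rewrite leNgt; apply/negP => pq.
  have := Hq p; rewrite (ltW p0) (ltW pq) /= => /(_ isT); lra.
have hs : has_sup U by split; [exists 0 | exists p].
set p1 := sup U.
have p10 : 0 <= p1 by exact: (sup_upper_bound hs U0).
have p1p : p1 <= p by apply: ge_sup => //; exists 0.
have K : forall r, 0 <= r -> r < p1 -> g r < th.
  move=> r r0 rp; have [q [q0 Hq] qr] := sup_adherent (eps := p1 - r) (ltac:(rewrite subr_gt0 //)) hs.
  by rewrite -/p1 in qr; apply: Hq; rewrite r0 /=; apply: ltW; lra.
set D := C + 1.
have D0 : 0 < D by rewrite /D; lra.
have ge1 : th <= g p1.
  rewrite leNgt; apply/negP => gl.
  set h := (th - g p1) / D.
  have h0 : 0 < h by rewrite /h divr_gt0 // subr_gt0.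
  have hD : D * h = th - g p1 by rewrite /h mulrC -mulrA mulVf ?mulr1 // gt_eqF.
  have : U (p1 + h).
    split; first lra.
    move=> r /andP [r0 rh]; have [rp|pr] := ltP r p1; first exact: K.
    have := Lip r p1; rewrite ger0_norm ?subr_ge0 // => L.
    have : C * (r - p1) <= C * h by apply: ler_wpM2l => //; lra.
    move: hD; rewrite /D => hD; nra.
  move=> /sup_upper_bound-/(_ hs); rewrite -/p1; lra.
have le1 : g p1 <= th.
  rewrite leNgt; apply/negP => gl.
  set h := (g p1 - th) / D.
  have h0 : 0 < h by rewrite /h divr_gt0 // subr_gt0.
  have hD : D * h = g p1 - th by rewrite /h mulrC -mulrA mulVf ?mulr1 // gt_eqF.
  have [q [q0 Hq] qh] := sup_adherent h0 hs.
  have qp1 : q <= p1 by exact: (sup_upper_bound hs (conj q0 Hq)).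
  have gq : g q < th by apply: Hq; rewrite q0 lexx.
  have := Lip p1 q; rewrite ger0_norm ?subr_ge0 // => L.
  have : C * (p1 - q) <= C * h by apply: ler_wpM2l => //; rewrite -/p1 in qh; lra.
  move: hD; rewrite /D => hD; nra.
have e : g p1 = th by apply/eqP; rewrite eq_le le1 ge1.
exists p1; split => //.
- rewrite lt_neqAle p10 andbT; apply/eqP => h; move: g0; rewrite h e; lra.
- rewrite lt_neqAle p1p andbT; apply/eqP => h; move: gp; rewrite -h e; lra.
- move=> q q0 tq; rewrite leNgt; apply/negP => qp.
  have := K q (ltW q0) qp; lra.
Qed.


Definition sl {R : realType} (f : R -> R) a b := (f b - f a) / (b - a).

Lemma chord {R : realType} (f : R -> R) :
  (forall x y t, 0 < x -> 0 < y -> x != y -> 0 < t < 1 ->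
      t * f x + (1 - t) * f y < f (t * x + (1 - t) * y)) ->
  forall a b c, 0 < a -> a < b -> b < c -> sl f b c < sl f a b.
Proof.
move=> cc a b c a0 ab bc.
set t := (c - b) / (c - a).
have ca : 0 < c - a by lra.
have t0 : 0 < t by rewrite /t divr_gt0 //; lra.
have t1 : t < 1 by rewrite /t ltr_pdivrMr //; lra.
have hb : t * a + (1 - t) * c = b.
  rewrite /t; field; rewrite subr_eq0 gt_eqF //; lra.
have := cc a c t a0 (lt_trans a0 (lt_trans ab bc)) (negbT (lt_eqF (lt_trans ab bc))) (introT andP (conj t0 t1)).
rewrite hb => H.
have H2 : (f c - f b) * (b - a) < (f b - f a) * (c - b).
  rewrite -(ltr_pM2r ca) in H.
  have e : (t * f a + (1 - t) * f c) * (c - a) = (c - b) * f a + (b - a) * f c.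
    rewrite /t; field; rewrite subr_eq0 gt_eqF //; lra.
  rewrite e in H; nra.
rewrite /sl ltr_pdivrMr ?subr_gt0 // mulrAC ltr_pdivlMr ?subr_gt0 //.
Qed.


Definition kf {R : realType} (f : R -> R) (s : R) : R -> R := f - (s \*: (@id R)).

Lemma dk {R : realType} (f : R -> R) (s z : R) : derivable f z 1 ->
  derivable (kf f s) z 1 /\ derive1 (kf f s) z = derive1 f z - s.
Proof.
move=> df.
have di : derivable (s \*: (@id R)) z 1 by apply: derivableZ; exact: derivable_id.
split; first exact: derivableB.
rewrite !derive1E /kf deriveB // deriveZ ?derive_id //.
by rewrite /GRing.scale /= mulr1.
Qed.

Lemma kf_val {R : realType} (f : R -> R) s x : kf f s x = f x - s * x.
Proof. by rewrite /kf /= /GRing.scale /=. Qed.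

Lemma der_le_of_decr {R : realType} (f : R -> R) s a z :
  (forall x, derivable f x 1) -> (forall x y, a < x -> x < y -> sl f x y < s) ->
  a < z -> derive1 f z <= s.
Proof.
move=> df H az.
have [_ e] := dk _ s _ (df z).
rewrite -subr_le0 -e.
apply: (@decr_derive1_le0_itvy _ _ false a).
- by move=> x _; have [] := dk _ s _ (df x).
- move=> x y; rewrite !in_itv /= !andbT => ax ay xy.
  have := H y x ay xy; rewrite /sl ltr_pdivrMr ?subr_gt0 // => h.
  rewrite !kf_val; lra.
- by rewrite in_itv /= andbT.
Qed.

Lemma der_ge_of_incr {R : realType} (f : R -> R) s a b z :
  (forall x, derivable f x 1) -> (forall x y, a < x -> x < y -> y < b -> s < sl f x y) ->
  a < z -> z < b -> s <= derive1 f z.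
Proof.
move=> df H az zb.
have [_ e] := dk _ s _ (df z).
rewrite -subr_ge0 -e.
apply: (@incr_derive1_ge0_itv _ _ false true a b).
- by move=> x _; have [] := dk _ s _ (df x).
- move=> x y; rewrite !in_itv /= => /andP [ax xb] /andP [ay yb] xy.
  have := H x y ax xy yb; rewrite /sl ltr_pdivlMr ?subr_gt0 // => h.
  rewrite !kf_val; lra.
- by rewrite in_itv /= az zb.
Qed.


Lemma lim_ge {R : realType} (g : R -> R) s t : derivable g 0 1 ->
  (forall x, 0 < x -> x < t -> s <= g x) -> 0 < t -> s <= g 0.
Proof.
move=> dg H t0.
have cg : {for 0, continuous g}.
  by apply: differentiable_continuous; rewrite -derivable1_diffP.
rewrite leNgt; apply/negP => gs.
have e0 : 0 < s - g 0 by rewrite subr_gt0.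
have := @cvgr_dist_lt _ _ _ _ _ _ _ cg _ e0.
move=> H1; have [d d0 Hd] := (nbhs_ballP _ _).1 (H1 (nbhs_filter _)).
set x := Num.min d t / 2.
have m0 : 0 < Num.min d t by rewrite lt_min d0 t0.
have x0 : 0 < x by rewrite /x divr_gt0.
have md : Num.min d t <= d by rewrite ge_min lexx.
have mt : Num.min d t <= t by rewrite ge_min lexx orbT.
have xd : x < d by rewrite /x ltr_pdivrMr //; lra.
have xt : x < t by rewrite /x ltr_pdivrMr //; lra.
have := Hd x; rewrite /ball /= sub0r normrN gtr0_norm // => /(_ xd).
have := H x x0 xt.
move=> h1 h2; rewrite distrC in h2; have := ler_norm (g x - g 0); lra.
Qed.


Lemma psi_pos_slope {R : realType} (f : R -> R) : admissible f ->
  forall a b, 0 <= b -> b < a -> 0 < f a - f b < a - b.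
Proof.
move=> [sm [odd [dpos [d0 [_ [_ [_ ccv]]]]]]].
have df : forall x, derivable f x 1 by move=> x; exact: (sm 0%N x).
have ddf : forall x, derivable (derive1 f) x 1 by move=> x; exact: (sm 1%N x).
have ch := chord _ ccv.
have dlt1 : forall c, 0 < c -> derive1 f c < 1.
  move=> c c0.
  set s1 := sl f (c / 2) (3 * c / 4); set s2 := sl f (c / 4) (c / 2).
  have h1 : derive1 f c <= s1.
    apply: (der_le_of_decr _ s1 (3 * c / 4)) => //; last lra.
    move=> x y ax xy.
    have := ch (c / 2) (3 * c / 4) x ltac:(lra) ltac:(lra) ax.
    have := ch (3 * c / 4) x y ltac:(lra) ax xy.
    rewrite -/s1; lra.
  have h2 : forall z, 0 < z -> z < c / 4 -> s2 <= derive1 f z.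
    move=> z z0 zc; apply: (der_ge_of_incr _ s2 0 (c / 4)) => //.
    move=> x y x0 xy yc.
    have := ch x y (c / 4) x0 xy yc.
    have := ch y (c / 4) (c / 2) ltac:(lra) yc ltac:(lra).
    rewrite -/s2; lra.
  have h3 : s2 <= derive1 f 0.
    apply: (lim_ge _ s2 (c / 4)) => //; lra.
  have h4 : s1 < s2 by apply: ch; lra.
  lra.
move=> a b b0 ba.
have [c cab e] := @MVT _ f (derive1 f) b a ba
  (fun x _ => ltac:(rewrite derive1E; exact: derivableP))
  (derivable_within_continuous (fun x _ => df x)).
move: cab; rewrite in_itv /= => /andP [bc ca].
have c0 : 0 < c by lra.
have := dlt1 c c0; have := dpos c; rewrite e => h1 h2.
apply/andP; split; nra.
Qed.

Lemma psi_slope {R : realType} (f : R -> R) : admissible f ->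
  forall a b, b < a -> 0 < f a - f b < a - b.
Proof.
move=> adm; have P := psi_pos_slope _ adm.
have [_ [odd _]] := adm.
have f0 : f 0 = 0 by have := odd 0; rewrite oppr0 => h; lra.
move=> a b ba.
have [b0|b0] := leP 0 b; first exact: P.
have [a0|a0] := leP a 0.
  have := P (- b) (- a) ltac:(lra) ltac:(lra); rewrite !odd => /andP [h1 h2].
  apply/andP; split; lra.
have := P a 0 (lexx 0) a0; have := P (- b) 0 (lexx 0) ltac:(lra).
rewrite odd f0 => /andP [h1 h2] /andP [h3 h4].
apply/andP; split; lra.
Qed.


Lemma qf_row {R : realType} {n : nat} (M : 'M[R]_n) u :
  qf M u = \sum_i u i 0 * (M *m u) i 0.
Proof. by rewrite /qf -mulmxA mxE; apply: eq_bigr => i _; rewrite mxE. Qed.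

Lemma Lpi_mul {R : realType} {n : nat} (A : 'M[R]_n) q (u : 'cV[R]_n) i :
  (Lpi A q *m u) i 0 = delta A i * u i 0 - q * (A *m u) i 0.
Proof. by rewrite /Lpi /Delta mulmxBl -scalemxAl mul_diag_mx !mxE. Qed.

Lemma J_mul {R : realType} {n : nat} (A : 'M[R]_n) eps (v : 'cV[R]_n) i :
  ((1%:M - eps *: Delta A) *m v) i 0 = v i 0 - eps * (delta A i * v i 0).
Proof. by rewrite mulmxBl mul1mx -scalemxAl /Delta mul_diag_mx !mxE. Qed.

Lemma traj_entry {R : realType} {n : nat} (A : 'M[R]_n) psi eps p x :
  is_trajectory A psi eps p x -> forall k i,
  x k.+1 i 0 = x k i 0 - eps * (delta A i * x k i 0) +
     eps * p * (A *m psiv psi (x k)) i 0.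
Proof. by move=> T k i; rewrite T mxE J_mul mxE. Qed.

Lemma period2_bad {R : realType} {n : nat} (A : 'M[R]_n) psi eps p (a b : 'cV[R]_n) :
  (forall i, admissible (psi i)) -> 0 < eps -> 0 < p ->
  (forall i, eps * delta A i < 2) ->
  a != b ->
  (forall i, b i 0 = a i 0 - eps * (delta A i * a i 0) + eps * p * (A *m psiv psi a) i 0) ->
  (forall i, a i 0 = b i 0 - eps * (delta A i * b i 0) + eps * p * (A *m psiv psi b) i 0) ->
  exists u, 2 / eps * nrm u < qf (Lpi A p) u.
Proof.
move=> adm e0 p0 ed ab Eb Ea.
set w := psiv psi a - psiv psi b.
exists w.
have Aw : forall i, (A *m w) i 0 = (A *m psiv psi a) i 0 - (A *m psiv psi b) i 0.
  by move=> i; rewrite /w mulmxBr !mxE.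
have wi : forall i, w i 0 = psi i (a i 0) - psi i (b i 0) by move=> i; rewrite /w !mxE.
have E : forall i, (2 - eps * delta A i) * (a i 0 - b i 0) + eps * p * (A *m w) i 0 = 0.
  move=> i; rewrite Aw; have := Eb i; have := Ea i; lra.
set t := fun i => w i 0 * (delta A i * w i 0 - p * (A *m w) i 0) - 2 / eps * w i 0 ^+ 2.
have tE : forall i, t i = (2 - eps * delta A i) / eps * (w i 0 * ((a i 0 - b i 0) - w i 0)).
  move=> i; rewrite /t.
  have h : eps * (p * (A *m w) i 0) = - ((2 - eps * delta A i) * (a i 0 - b i 0)).
    by have := E i; lra.
  have -> : p * (A *m w) i 0 = - ((2 - eps * delta A i) * (a i 0 - b i 0)) / eps.
    by rewrite -h; field; rewrite gt_eqF.
  by field; rewrite gt_eqF.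
have tge : forall i, 0 <= t i.
  move=> i; rewrite tE; apply: mulr_ge0.
    by apply: divr_ge0; [have := ed i; lra | exact: ltW].
  rewrite wi; have [h|h|h] := ltgtP (a i 0) (b i 0).
  - have := psi_slope _ (adm i) _ _ h; move=> /andP [h1 h2]; nra.
  - have := psi_slope _ (adm i) _ _ h; move=> /andP [h1 h2]; nra.
  - by rewrite h subrr mul0r.
have [i0 ne] : exists i, a i 0 != b i 0.
  apply/existsP; apply: contraR ab => /existsPn H; apply/eqP/matrixP => i j.
  by rewrite (ord1 j); move: (H i); rewrite negbK => /eqP.
have tgt : 0 < t i0.
  rewrite tE; apply: mulr_gt0.
    by apply: divr_gt0 => //; have := ed i0; lra.
  rewrite wi; have [h|h|h] := ltgtP (a i0 0) (b i0 0).
  - have := psi_slope _ (adm i0) _ _ h; move=> /andP [h1 h2]; nra.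
  - have := psi_slope _ (adm i0) _ _ h; move=> /andP [h1 h2]; nra.
  - by rewrite h eqxx in ne.
have : 0 < \sum_i t i.
  rewrite (bigD1 i0) //=; apply: ltr_pwDl => //.
  by apply: sumr_ge0 => i _; exact: tge.
rewrite /t sumrB -mulr_sumr qf_row nrm_sum.
have -> : \sum_i w i 0 * (delta A i * w i 0 - p * (A *m w) i 0) =
          \sum_i w i 0 * (Lpi A p *m w) i 0.
  by apply: eq_bigr => i _; rewrite Lpi_mul.
lra.
Qed.


Lemma qf_lin {R : realType} {n : nat} (M B : 'M[R]_n) c u :
  qf (M - c *: B) u = qf M u - c * qf B u.
Proof. by rewrite /qf mulmxBr mulmxBl -scalemxAr -scalemxAl !mxE. Qed.

Local Close Scope classical_set_scope.

Theorem lemma4 (R : realType) (n : nat) (A : 'M[R]_n) (psi : 'I_n -> R -> R)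
  (p eps : R) (x : nat -> 'cV[R]_n) :
  signed_graph_ok A ->
  (forall i, admissible (psi i)) ->
  0 < p ->
  0 < eps -> eps < 2 / (\big[Num.max/0]_(i < n) delta A i) ->
  is_trajectory A psi eps p x ->
  (exists K : nat, x K.+1 != x K /\ forall k, (K <= k)%N -> x k.+2 = x k) ->
  exists p1, is_pi1d A eps p1 /\ p1 < p.
Proof.
move=> [AT [_ [_ dpos]]] adm p0 e0 eM T [K [neq per]].
have n0 : (0 < n)%N.
  rewrite lt0n; apply/negP => /eqP n00; move/negP: neq; apply.
  by apply/eqP/matrixP => i j; have := ltn_ord i; rewrite {2}n00.
set M := \big[Num.max/0]_(i < n) delta A i.
have dM : forall i, delta A i <= M by move=> i; exact: le_bigmax.
have M0 : 0 < M by apply: lt_le_trans (dpos (Ordinal n0)) (dM _).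
have Mth : M < 2 / eps.
  by move: eM; rewrite -/M ltr_pdivlMr // => h; rewrite ltr_pdivlMr //; lra.
have ed : forall i, eps * delta A i < 2.
  move=> i; have := dM i; move: eM; rewrite -/M ltr_pdivlMr // => h h2; nra.
set th := 2 / eps.
set g := fun q => gmax (Lpi A q).
have sym : forall q, (Lpi A q)^T = Lpi A q.
  by move=> q; rewrite /Lpi linearB linearZ /= AT /Delta tr_diag_mx.
have Lip : forall a b, g a <= g b + cB A * `|a - b|.
  move=> a b; apply: gmax_le => // u.
  have -> : Lpi A a = Lpi A b - (a - b) *: A.
    by rewrite /Lpi scalerBl opprB addrA subrK. 
  rewrite qf_lin.
  have h1 := gmax_ub (Lpi A b) u n0.
  have h2 : - ((a - b) * qf A u) <= `|a - b| * (cB A * nrm u).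
    apply: le_trans (ler_norm _) _; rewrite normrN normrM.
    by apply: ler_wpM2l => //; exact: qf_bound.
  rewrite /g /=; lra.
have g0 : g 0 < th.
  apply: le_lt_trans Mth; apply: gmax_le => // u.
  rewrite qf_row nrm_sum mulr_sumr; apply: ler_sum => i _.
  rewrite Lpi_mul mul0r subr0 mulrA (mulrC (u i 0)) -mulrA -expr2.
  by apply: ler_wpM2r; [exact: sqr_ge0 | exact: dM].
have gp : th < g p.
  have [u hu] := @period2_bad _ _ A psi eps p (x K) (x K.+1) adm e0 p0 ed ltac:(by rewrite eq_sym)
    (fun i => traj_entry _ _ _ _ _ T K i)
    (fun i => ltac:(rewrite -{1}(per K (leqnn K)); exact: traj_entry _ _ _ _ _ T K.+1 i)).
  rewrite ltNge; apply/negP => h.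
  have hq := gmax_ub (Lpi A p) u n0; have N0 := nrm_ge0 u.
  have h3 : gmax (Lpi A p) * nrm u <= 2 / eps * nrm u by exact: (ler_wpM2r N0 h).
  by have := lt_le_trans hu (le_trans hq h3); rewrite ltxx.
have cB0 : 0 <= cB A by rewrite /cB sumr_ge0 // => i _; rewrite sumr_ge0.
have [p1 [p10 p1p gp1 pmin]] := ivt_first g (cB A) th p cB0 Lip g0 gp p0.
exists p1; split => //; split => //.
have lg : is_largest_eigenvalue (Lpi A p1) th.
  split.
    by rewrite -gp1; exact: eig_attain.
  by move=> mu hmu; rewrite -gp1; exact: eig_le.
split => // q q0 [hq _].
apply: pmin => //.
exact: eig_le.
Qed.
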